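(* Let $0\le r\le n/2$, let $B = B(n,r)=\{x\in\{0,1\}^n : |x|\le r\}$, and let $A$ be the adjacency matrix of the subgraph of the Hamming cube induced by $B$. For $y \in B$, let $S^{(B)}_y$ be the space of real functions $f$ on $B$ such that $f(x)$ depends only on the pair of Hamming distances $(|x|, |x-y|)$. Then $S^{(B)}_y$ is an invariant subspace of $A$.
   Context: $\{0,1\}^n$ is the Hamming cube (vertices adjacent iff Hamming distance $1$), $|x-y|$ the Hamming distance and $|x|=|x-0|$. *)

(* Defs.v *)
From HB Require Import structures.
From mathcomp Require Import all_boot all_order all_algebra.
From mathcomp Require Import reals.
Set Implicit Arguments. Unset Strict Implicit. Unset Printing Implicit Defensive.
Import Order.TTheory GRing.Theory Num.Theory.
Local Open Scope ring_scope.

Definition cube (n : nat) := {ffun 'I_n -> bool}.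

Definition hdist (n : nat) (x y : cube n) : nat := #|[set i | x i != y i]|.

Definition hwt (n : nat) (x : cube n) : nat := hdist x [ffun => false].

Definition ball (n r : nat) := {x : cube n | (hwt x <= r)%N}.

Definition adj_op (R : realType) (n r : nat) (f : ball n r -> R) : ball n r -> R :=
  fun x => \sum_(z : ball n r | hdist (val x) (val z) == 1%N) f z.

Definition in_Sy (R : realType) (n r : nat) (y : ball n r) (f : ball n r -> R) : Prop :=
  forall x1 x2 : ball n r,
    hwt (val x1) = hwt (val x2) ->
    hdist (val x1) (val y) = hdist (val x2) (val y) -> f x1 = f x2.

(* Main.v *)
Require Import Defs.
From HB Require Import structures.
From mathcomp Require Import all_boot all_order all_algebra.
From mathcomp Require Import reals.
From mathcomp Require Import all_fingroup zify.

Set Implicit Arguments. Unset Strict Implicit.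

Definition actc (n : nat) (s : {perm 'I_n}) (x : cube n) : cube n :=
  [ffun i => x (s i)].

Lemma hdist_act n (s : {perm 'I_n}) x z : hdist (actc s x) (actc s z) = hdist x z.
Proof.
rewrite /hdist -(card_preimset [set i | x i != z i] (@perm_inj _ s)).
apply: eq_card => i.
by rewrite !inE !ffunE.
Qed.

Lemma act0 n (s : {perm 'I_n}) : actc s [ffun => false] = [ffun => false].
Proof. by apply/ffunP => i; rewrite !ffunE. Qed.

Lemma hwt_act n (s : {perm 'I_n}) x : hwt (actc s x) = hwt x.
Proof. by rewrite /hwt -{1}(act0 s) hdist_act. Qed.

Lemma actcK n (s : {perm 'I_n}) x : actc (s^-1)%g (actc s x) = x.
Proof. by apply/ffunP => i; rewrite !ffunE permKV. Qed.

Definition actB n r (s : {perm 'I_n}) (x : ball n r) : ball n r :=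
  Sub (actc s (val x)) (eq_ind_r (fun k => (k <= r)%N) (valP x) (hwt_act s (val x))).

Lemma actB_bij n r (s : {perm 'I_n}) : bijective (@actB n r s).
Proof.
exists (actB (s^-1)%g) => x; apply: val_inj; rewrite /actB !SubK; first exact: actcK.
by have := actcK (s^-1)%g (val x); rewrite invgK.
Qed.

Lemma card_count n (P : pred 'I_n) : #|[set i | P i]| = count P (enum 'I_n).
Proof. by rewrite cardsE cardE /enum_mem size_filter (@eq_filter _ _ predT) ?filter_predT. Qed.

Definition cnt (I : Type) (a b : I -> bool) (s : seq I) p q :=
  count (fun i => (a i, b i) == (p, q)) s.

Lemma count_split (I : Type) (a b : I -> bool) (s : seq I) :
  let c p q := cnt a b s p q in
  [/\ count (fun i => a i != false) s = (c true true + c true false)%N,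
      count (fun i => a i != b i) s = (c true false + c false true)%N,
      count (fun i => b i) s = (c true true + c false true)%N &
      size s = (c true true + c true false + c false true + c false false)%N].
Proof.
rewrite /cnt; elim: s => [|x s [IH1 IH2 IH3 IH4]] //=.
case: (a x); case: (b x) => /=; rewrite IH1 IH2 IH3 IH4; split; rewrite ?add0n ?add1n ?addSn ?addnS ?addnA //; lia.
Qed.

Lemma count_bb (a : pred (bool * bool)) (s : seq (bool * bool)) :
  count a s = (a (true,true) * count_mem (true,true) s + a (true,false) * count_mem (true,false) s
   + a (false,true) * count_mem (false,true) s + a (false,false) * count_mem (false,false) s)%N.
Proof.
elim: s => [|[[] []] s IH] /=; first lia; rewrite IH /=;
case: (a (true,true)); case: (a (true,false)); case: (a (false,true)); case: (a (false,false)) => /=; lia.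
Qed.

Theorem lemma2p1 (R : realType) (n r : nat) (hr : (2 * r <= n)%N) (y : ball n r) :
  forall f : ball n r -> R, in_Sy y f -> in_Sy y (adj_op f).
Proof.
move=> f hf x1 x2 hw hd.
pose g (x : cube n) := fun i : 'I_n => (x i, val y i).
have hp : perm_eq [seq g (val x1) i | i <- enum 'I_n] [seq g (val x2) i | i <- enum 'I_n].
  apply/seq.permP => a; rewrite [LHS]count_bb [RHS]count_bb.
  suff E : forall p q, count_mem (p,q) [seq g (val x1) i | i <- enum 'I_n]
     = count_mem (p,q) [seq g (val x2) i | i <- enum 'I_n] by rewrite !E.
  have C (x : cube n) p q : count_mem (p,q) [seq g x i | i <- enum 'I_n] = count (fun i => g x i == (p,q)) (enum 'I_n) by rewrite count_map.
  move=> p q; rewrite !C.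
  change (cnt (val x1) (val y) (enum 'I_n) p q = cnt (val x2) (val y) (enum 'I_n) p q).
  move: p q.
  have W (x : cube n) : hwt x = count (fun i => x i != false) (enum 'I_n).
    by rewrite /hwt /hdist card_count; apply: eq_count => i; rewrite ffunE.
  have D (x : cube n) : hdist x (val y) = count (fun i => x i != val y i) (enum 'I_n).
    by rewrite /hdist card_count.
  move: hw hd; rewrite !W !D.
  have [A1 A2 A3 A4] := count_split (val x1) (val y) (enum 'I_n).
  have [B1 B2 B3 B4] := count_split (val x2) (val y) (enum 'I_n).
  rewrite A1 A2 B1 B2 => hw hd.
  rewrite A3 in B3; rewrite A4 in B4.
  by move=> [] []; lia.
have [s hs] : exists s : {perm 'I_n}, forall i, g (val x1) i = g (val x2) (s i).
  have hp' : perm_eq (map_tuple (g (val x1)) (ord_tuple n)) (map_tuple (g (val x2)) (ord_tuple n)).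
    by move: hp; rewrite -val_ord_tuple.
  case/tuple_permP: hp' => s hs'; exists s => i.
  have hs2 : map_tuple (g (val x1)) (ord_tuple n) = [tuple tnth (map_tuple (g (val x2)) (ord_tuple n)) (s i) | i < n] := val_inj hs'.
  have := congr1 (fun t => tnth t i) hs2.
  by rewrite /= tnth_map tnth_ord_tuple tnth_mktuple tnth_map tnth_ord_tuple.
have Ex : val x1 = actc s (val x2).
  by apply/ffunP => i; rewrite ffunE; have := hs i; rewrite /g => -[].
have Ey : actc s (val y) = val y.
  by apply/ffunP => i; rewrite ffunE; have := hs i; rewrite /g => -[].
rewrite /adj_op (reindex (actB s)); last by apply: onW_bij; exact: actB_bij.
apply: eq_big => w; first by rewrite /actB SubK Ex hdist_act.
move=> _; apply: hf; first by rewrite /actB SubK hwt_act.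
rewrite /actB SubK.
have := hdist_act s (val w) (val y); rewrite Ey; exact.
Qed.
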